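(* Let $\mathcal{X}=\{\{\mathbf{x}^{(\mathbf{n},m)}\in\mathbb{R}^D\}_{\mathbf{n}\in[N]^P}\}_{m=1}^M$ and let $\bar{\mathcal{K}}\subseteq[N]^P$ have size divisible by $2^P$. Then there exists a complete undirected weighted graph with vertex set $\bar{\mathcal{K}}$ and edge weights $w$ such that for every partition of $\bar{\mathcal{K}}$ into $2^P$ equally sized disjoint sets $\{\mathcal{K}_{\mathbf{k}}\}_{\mathbf{k}\in[2]^P}$, the weight of the induced $2^P$-cut, $\frac12\sum_{\mathbf{k}\in[2]^P}\sum_{\mathbf{n}\in\mathcal{K}_{\mathbf{k}},\,\mathbf{n}'\in\bar{\mathcal{K}}\setminus\mathcal{K}_{\mathbf{k}}}w(\{\mathbf{n},\mathbf{n}'\})$, is equal, up to multiplicative and additive constants independent of the partition, to $\frac1{2^P}\sum_{\mathbf{k}\in[2]^P}\mathrm{SE}(\mathcal{X};\mathcal{K}_{\mathbf{k}})$. Consequently, minimizing $\frac1{2^P}\sum_{\mathbf{k}}\mathrm{SE}(\mathcal{X};\mathcal{K}_{\mathbf{k}})$ over such balanced partitions is a minimum balanced $2^P$-cut problem over a complete graph with $|\bar{\mathcal{K}}|$ vertices.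
   Context: For the instance set $\mathcal{X}$ and features $\mathbf{n},\mathbf{n}'\in[N]^P$, let $\mu^{(\mathbf{n})}=\frac1M\sum_m\mathbf{x}^{(\mathbf{n},m)}$, $\Sigma^{(\mathbf{n})}=\frac1M\sum_m(\mathbf{x}^{(\mathbf{n},m)}-\mu^{(\mathbf{n})})\otimes(\mathbf{x}^{(\mathbf{n},m)}-\mu^{(\mathbf{n})})$, $\Sigma^{(\mathbf{n},\mathbf{n}')}=\frac1M\sum_m(\mathbf{x}^{(\mathbf{n},m)}-\mu^{(\mathbf{n})})\otimes(\mathbf{x}^{(\mathbf{n}',m)}-\mu^{(\mathbf{n}')})$, and the multivariate Pearson correlation $p_{\mathbf{n},\mathbf{n}'}:=\mathrm{tr}(\Sigma^{(\mathbf{n},\mathbf{n}')})/\mathrm{tr}((\Sigma^{(\mathbf{n})}\Sigma^{(\mathbf{n}')})^{1/2})$. For $\mathcal{K}\subseteq[N]^P$, the surrogate entanglement is $\mathrm{SE}(\mathcal{X};\mathcal{K}):=\sum_{\mathbf{n}\in\mathcal{K},\,\mathbf{n}'\in[N]^P\setminus\mathcal{K}}p_{\mathbf{n},\mathbf{n}'}$. *)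

(* Defs.v *)
From Stdlib Require Import ClassicalEpsilon.
From mathcomp Require Import all_boot all_order all_algebra.
From mathcomp Require Import reals.
Set Implicit Arguments. Unset Strict Implicit. Unset Printing Implicit Defensive.
Import Order.TTheory GRing.Theory Num.Theory.
Local Open Scope ring_scope.

Section Defs.
Variables (R : realType) (N P D M : nat).

Definition idx := {ffun 'I_P -> 'I_N}.
Definition idx2 := {ffun 'I_P -> 'I_2}.

Definition dataset := idx -> 'I_M -> 'cV[R]_D.

Definition outer (u v : 'cV[R]_D) : 'M[R]_D := u *m v^T.

Definition mean (x : dataset) (n : idx) : 'cV[R]_D :=
  (M%:R)^-1 *: \sum_(m < M) x n m.

Definition cov (x : dataset) (n : idx) : 'M[R]_D :=
  (M%:R)^-1 *: \sum_(m < M) outer (x n m - mean x n) (x n m - mean x n).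

Definition cross_cov (x : dataset) (n n' : idx) : 'M[R]_D :=
  (M%:R)^-1 *: \sum_(m < M) outer (x n m - mean x n) (x n' m - mean x n').

Definition nonneg_spectrum (S : 'M[R]_D) : Prop :=
  exists c : 'I_D -> R, (forall i, 0 <= c i) /\
    char_poly S = \prod_(i < D) ('X - (c i)%:P).

Definition is_principal_sqrt (A S : 'M[R]_D) : Prop :=
  S *m S = A /\ nonneg_spectrum S.

(* the matrix square root A^{1/2} (a principal square root; its trace is
   independent of the choice); 0 if no such root exists *)
Definition sqrtm (A : 'M[R]_D) : 'M[R]_D :=
  match excluded_middle_informative (exists S, is_principal_sqrt A S) with
  | left h => proj1_sig (constructive_indefinite_description _ h)
  | right _ => 0
  end.

Definition pearson (x : dataset) (n n' : idx) : R :=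
  \tr (cross_cov x n n') / \tr (sqrtm (cov x n *m cov x n')).

Definition SE (x : dataset) (K : {set idx}) : R :=
  \sum_(n in K) \sum_(n' in ~: K) pearson x n n'.

Definition balanced_partition (Kbar : {set idx}) (K : idx2 -> {set idx}) : Prop :=
  [/\ \bigcup_(k : idx2) K k = Kbar,
      (forall k k' : idx2, k != k' -> [disjoint K k & K k']) &
      (forall k k' : idx2, #|K k| = #|K k'|)].

Definition cut_weight (w : idx -> idx -> R) (Kbar : {set idx})
    (K : idx2 -> {set idx}) : R :=
  2^-1 * \sum_(k : idx2) \sum_(n in K k) \sum_(n' in Kbar :\: K k) w n n'.

End Defs.

(* Main.v *)
Require Import Defs.
From mathcomp Require Import all_boot all_order all_algebra.
From mathcomp Require Import reals.
From mathcomp Require Import ring.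
Import Order.TTheory GRing.Theory Num.Theory.
Local Open Scope ring_scope.

Lemma sum_compl (R : realType) (T : finType) (A : {set T}) (f : T -> R) :
  \sum_(i in ~: A) f i = \sum_i f i - \sum_(i in A) f i.
Proof.
have -> : \sum_i f i = \sum_(i in [set: T]) f i by apply: eq_bigl => i; rewrite in_setT.
rewrite (big_setID (A := [set: T]) A) setTI setTD addrAC subrr add0r //.
Qed.

Lemma sum_diff (R : realType) (T : finType) (A B : {set T}) (f : T -> R) :
  A \subset B -> \sum_(i in B :\: A) f i = \sum_(i in B) f i - \sum_(i in A) f i.
Proof.
move=> sAB; rewrite [X in _ = X - _](big_setID (A := B) A) /=.
by rewrite (setIidPr sAB) addrAC subrr add0r.
Qed.

Theorem proposition5 (R : realType) (N P D M : nat)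
  (x : dataset R N P D M) (Kbar : {set idx N P}) :
  (2 ^ P %| #|Kbar|)%N ->
  exists w : idx N P -> idx N P -> R,
    (forall n n', w n n' = w n' n) /\
    exists a b : R, 0 < a /\
      forall K : idx2 P -> {set idx N P},
        balanced_partition Kbar K ->
        cut_weight w Kbar K =
          a * ((2 ^+ P)^-1 * \sum_(k : idx2 P) SE x (K k)) + b.
Proof.
move=> _.
set p := pearson x.
exists (fun n n' => p n n' + p n' n); split.
  by move=> n n'; rewrite addrC.
exists (2 ^+ P), (- \sum_(n in Kbar) \sum_(n' in ~: Kbar) p n n'); split.
  by rewrite exprn_gt0.
move=> K [cupK disjK _].
have sub k : K k \subset Kbar by rewrite -cupK; apply: (bigcup_sup k).
have part (g : idx N P -> R) : \sum_k \sum_(n in K k) g n = \sum_(n in Kbar) g n.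
  by rewrite -cupK partition_disjoint_bigcup.
rewrite mulrA mulfV ?expf_neq0 ?pnatr_eq0 // mul1r.
rewrite /cut_weight /SE.
have -> : \sum_k \sum_(n in K k) \sum_(n' in Kbar :\: K k) (p n n' + p n' n) =
   \sum_(n in Kbar) \sum_(n' in Kbar) (p n n' + p n' n)
   - \sum_k \sum_(n in K k) \sum_(n' in K k) (p n n' + p n' n).
  rewrite -(part (fun n => \sum_(n' in Kbar) (p n n' + p n' n))) -sumrB.
  apply: eq_bigr => k _; rewrite -sumrB; apply: eq_bigr => n _.
  by rewrite sum_diff.
have -> : \sum_k \sum_(n in K k) \sum_(n' in ~: K k) p n n' =
   \sum_(n in Kbar) \sum_(n' in ~: Kbar) p n n' +
   (\sum_(n in Kbar) \sum_(n' in Kbar) p n n'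
   - \sum_k \sum_(n in K k) \sum_(n' in K k) p n n').
  rewrite -(part (fun n => \sum_(n' in ~: Kbar) p n n')).
  rewrite -(part (fun n => \sum_(n' in Kbar) p n n')) -sumrB -big_split /=.
  apply: eq_bigr => k _; rewrite -sumrB -big_split; apply: eq_bigr => n _ /=.
  rewrite !sum_compl; ring.
have sw (A : {set idx N P}) : \sum_(n in A) \sum_(n' in A) (p n n' + p n' n)
   = 2 * \sum_(n in A) \sum_(n' in A) p n n'.
  rewrite mulr2n mulrDl mul1r.
  under eq_bigr => n _ do rewrite big_split /=.
  rewrite big_split /=; congr (_ + _).
  by rewrite exchange_big.
rewrite sw.
rewrite (eq_bigr (fun k => 2 * \sum_(n in K k) \sum_(n' in K k) p n n')); last by move=> k _; rewrite sw.
rewrite -mulr_sumr -mulrBr mulrA mulVf ?pnatr_eq0 // mul1r.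
by rewrite addrAC subrr add0r.
Qed.
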